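(* Let $\Delta=(\Gamma,\mathbf{R})$ be a theory such that $\bigcirc(B/A)\in\mathbf{R}^{\mathrm{o}}$, there is no $r\in\mathbf{R}^{\mathrm{o}}$ with $r\triangleright\bigcirc(B/A)$, and $\Diamond(A\wedge B)\in\Gamma$, where $A,B$ are Boolean formulas. Then $\Delta\mid\sim\bigcirc(B/A)$.
   Context: Boolean formulas over propositional letters; $\models_{\mathrm{PL}}$ classical entailment, $\models_{\mathrm{S5}}$ S5 entailment; $\Diamond A=\neg\Box\neg A$ and $w\models\Box A$ iff $A$ holds at all worlds. A theory is $\Delta=(\Gamma,\mathbf{R})$, $\Gamma$ a finite set of Boolean or alethic formulas, $\mathbf{R}=(\mathbf{R}^{\Rightarrow},\mathbf{R}^{\mathrm{o}})$, $\mathbf{R}^{\Rightarrow}$ a finite (coherent) set of normality conditionals and $\mathbf{R}^{\mathrm{o}}$ a finite set of obligations $\bigcirc(B/A)$ (body $b=A$, head $h=B$). Overriding (relative to $\Gamma$): $r_j\triangleright r_i$ iff (i) $\{h(r_i),h(r_j)\}\cup\Gamma\models_{\mathrm{S5}}\bot$; (ii) $b(r_j)\models_{\mathrm{PL}}b(r_i)$ and $b(r_i)\not\models_{\mathrm{PL}}b(r_j)$; (iii) $\{h(r_i),b(r_j)\}\not\models_{\mathrm{PL}}\bot$. An $\mathbf{R}$-ordered model is $(W,\succeq_N,\succeq_I,v)$ with $W\neq\emptyset$, valuation $v$, $\succeq_N$ the normality total preorder determined by $\mathbf{R}^{\Rightarrow}$ via the lexicographic ranking on falsified conditionals (coherence: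 no nonempty $X\subseteq\mathbf{R}^{\Rightarrow}$ has $\mathrm{m}(X)\models_{\mathrm{PL}}\bigwedge_{r\in X}\neg b(r)$, with $\mathrm{m}(X)=\{A\rightarrow B:A\Rightarrow B\in X\}$; $\mathcal{E}_0=\mathbf{R}^{\Rightarrow}$, $\mathcal{E}_{i+1}=\{A\Rightarrow B\in\mathbf{R}^{\Rightarrow}:\mathrm{m}(\mathcal{E}_i)\models_{\mathrm{PL}}\neg A\}$, $m$ the stabilization index, $\Delta_i=\mathcal{E}_i\setminus\mathcal{E}_{i+1}$, $\Delta_m=\mathcal{E}_m$; $w_1\succeq_N w_2$ iff $\langle|\Delta_{m-1}\cap F(w_1)|,\dots,|\Delta_0\cap F(w_1)|\rangle$ is lexicographically $\le$ that of $w_2$, where $F(w)$ is the set of conditionals in $\mathbf{R}^{\Rightarrow}$ whose body holds and head fails at $w$), and $w_1\succeq_I w_2$ iff $V(w_1)\subseteq V(w_2)$ where $V(w)=\{r_i\in\mathbf{R}^{\mathrm{o}}:w\models b(r_i)\wedge\neg h(r_i)$ and $w\not\models b(r_j)$ for all $r_j\in\mathbf{R}^{\mathrm{o}}$ with $r_j\triangleright r_i\}$. $\max_{\succeq}(X)=\{w\in X:\forall u\in X(u\succeq w\Rightarrow w\succeq u)\}$. Lifting: $U\succeq_I^{s}U'$ iff for every $u'\in U'$ there is $u\in U$ with $u\succeq_I u'$. Truth: $w\models\bigcirc(B/A)$ iff $\max_{\succeq_N}(\Vert A\wedge\neg B\Vert)\not\succeq_I^{s}\max_{\succeq_N}(\Vert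 A\wedge B\Vert)$. $\Delta\mid\sim\varphi$ iff in every $\mathbf{R}$-ordered model every world satisfying all of $\Gamma$ satisfies $\varphi$. *)

(* Defs.v *)
From Stdlib Require Import List Arith ClassicalDescription.
Import ListNotations.

Inductive form : Type :=
| Var : nat -> form
| Bot : form
| Neg : form -> form
| And : form -> form -> form
| Or  : form -> form -> form
| Imp : form -> form -> form
| Box : form -> form.

Definition Dia (f : form) : form := Neg (Box (Neg f)).

Fixpoint boolean (f : form) : Prop :=
  match f with
  | Var _ | Bot => True
  | Neg g => boolean g
  | And g h | Or g h | Imp g h => boolean g /\ boolean h
  | Box _ => False
  end.

Record cond : Type := Cond { cbody : form; chead : form }.
(* obligation  O(B/A) : body A, head B *)
Record obl : Type := Obl { obody : form; ohead : form }.
Definition OB (B A : form) : obl := Obl A B.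

Fixpoint peval (v : nat -> bool) (f : form) : Prop :=
  match f with
  | Var n => v n = true
  | Bot => False
  | Neg g => ~ peval v g
  | And g h => peval v g /\ peval v h
  | Or g h => peval v g \/ peval v h
  | Imp g h => peval v g -> peval v h
  | Box g => peval v g (* never used: PL entailment only on Boolean formulas *)
  end.

Definition PLent_set (S : form -> Prop) (g : form) : Prop :=
  forall v : nat -> bool, (forall f, S f -> peval v f) -> peval v g.
Definition PLent (l : list form) (g : form) : Prop :=
  PLent_set (fun f => In f l) g.

Fixpoint s5eval {W : Type} (val : W -> nat -> bool) (w : W) (f : form) : Prop :=
  match f with
  | Var n => val w n = true
  | Bot => False
  | Neg g => ~ s5eval val w g
  | And g h => s5eval val w g /\ s5eval val w h
  | Or g h => s5eval val w g \/ s5eval val w h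
  | Imp g h => s5eval val w g -> s5eval val w h
  | Box g => forall u : W, s5eval val u g
  end.

Definition S5_inconsistent (l : list form) : Prop :=
  forall (W : Type) (val : W -> nat -> bool) (w : W),
    ~ (forall f, In f l -> s5eval val w f).

(** * Overriding (relative to Gamma):  overrides Gamma rj ri  means  rj |> ri *)
Definition overrides (Gamma : list form) (rj ri : obl) : Prop :=
  S5_inconsistent ([ohead ri; ohead rj] ++ Gamma) /\
  (PLent [obody rj] (obody ri) /\ ~ PLent [obody ri] (obody rj)) /\
  ~ PLent [ohead ri; obody rj] Bot.

Definition coherent (Rn : list cond) : Prop :=
  ~ exists X : cond -> Prop,
      (forall r, X r -> In r Rn) /\ (exists r, X r) /\
      (forall v : nat -> bool,
         (forall r, X r -> peval v (Imp (cbody r) (chead r))) ->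
         forall r, X r -> peval v (Neg (cbody r))).

Fixpoint Epart (Rn : list cond) (i : nat) : cond -> Prop :=
  match i with
  | 0 => fun r => In r Rn
  | S k => fun r =>
      In r Rn /\
      PLent_set (fun f => exists r', Epart Rn k r' /\ f = Imp (cbody r') (chead r'))
                (Neg (cbody r))
  end.

Definition Dpart (Rn : list cond) (i : nat) (r : cond) : Prop :=
  Epart Rn i r /\ ~ Epart Rn (S i) r.

Definition stab_index (Rn : list cond) (m : nat) : Prop :=
  (forall r, Epart Rn (S m) r <-> Epart Rn m r) /\
  (forall k, k < m -> ~ (forall r, Epart Rn (S k) r <-> Epart Rn k r)).

Definition pdec (P : Prop) : bool :=
  if excluded_middle_informative P then true else false.

(* lexicographic <= on vectors <f (m-1), ..., f 0> *)
Fixpoint lexle (m : nat) (f g : nat -> nat) : Prop :=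
  match m with
  | 0 => True
  | S k => f k < g k \/ (f k = g k /\ lexle k f g)
  end.

Record model : Type := Model {
  world : Type;
  val   : world -> nat -> bool;
  geN   : world -> world -> Prop;
  geI   : world -> world -> Prop
}.

Definition holds (M : model) (w : world M) (f : form) : Prop := s5eval (val M) w f.

Definition falsified (M : model) (w : world M) (r : cond) : Prop :=
  holds M w (cbody r) /\ ~ holds M w (chead r).

Definition fcount (Rn : list cond) (M : model) (w : world M) (i : nat) : nat :=
  length (filter (fun r => pdec (Dpart Rn i r /\ falsified M w r)) Rn).

Definition Viol (Gamma : list form) (Ro : list obl) (M : model) (w : world M)
    (ri : obl) : Prop :=
  In ri Ro /\ holds M w (obody ri) /\ ~ holds M w (ohead ri) /\
  forall rj, In rj Ro -> overrides Gamma rj ri -> ~ holds M w (obody rj).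

Definition R_ordered (Gamma : list form) (Rn : list cond) (Ro : list obl)
    (M : model) : Prop :=
  inhabited (world M) /\
  (forall m, stab_index Rn m ->
     forall w1 w2, geN M w1 w2 <-> lexle m (fcount Rn M w1) (fcount Rn M w2)) /\
  (forall w1 w2, geI M w1 w2 <->
     (forall r, Viol Gamma Ro M w1 r -> Viol Gamma Ro M w2 r)).

Definition maxset {W : Type} (ge : W -> W -> Prop) (X : W -> Prop) : W -> Prop :=
  fun w => X w /\ forall u, X u -> ge u w -> ge w u.

Definition lift_ge {W : Type} (ge : W -> W -> Prop) (U U' : W -> Prop) : Prop :=
  forall u', U' u' -> exists u, U u /\ ge u u'.

Definition sat_obl (M : model) (w : world M) (o : obl) : Prop :=
  ~ lift_ge (geI M)
      (maxset (geN M) (fun u => holds M u (And (obody o) (Neg (ohead o)))))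
      (maxset (geN M) (fun u => holds M u (And (obody o) (ohead o)))).

Definition nm_entails_obl (Gamma : list form) (Rn : list cond) (Ro : list obl)
    (o : obl) : Prop :=
  forall M : model, R_ordered Gamma Rn Ro M ->
    forall w : world M, (forall f, In f Gamma -> holds M w f) -> sat_obl M w o.

Definition theory_wf (Gamma : list form) (Rn : list cond) (Ro : list obl) : Prop :=
  NoDup Rn /\ NoDup Ro /\
  (forall r, In r Rn -> boolean (cbody r) /\ boolean (chead r)) /\
  (forall r, In r Ro -> boolean (obody r) /\ boolean (ohead r)) /\
  coherent Rn.

(* Main.v *)
Require Import Defs.
From Stdlib Require Import List Arith Lia Classical ClassicalDescription.

Lemma lexmin {W : Type} (m : nat) (f : W -> nat -> nat) (X : W -> Prop) :
  (exists w, X w) -> exists w, X w /\ forall u, X u -> lexle m (f w) (f u).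
Proof.
  revert X. induction m as [|k IH]; intros X [w0 Hw0].
  - exists w0. split; auto. intros; exact I.
  -
    assert (Hmin : forall n, (exists u, X u /\ f u k <= n) ->
      exists v, X v /\ forall u, X u -> f v k <= f u k).
    { induction n as [|n IHn]; intros [u [Xu Hu]].
      - exists u. split; auto. intros; lia.
      - destruct (classic (exists u, X u /\ f u k <= n)) as [H|H]; auto.
        exists u. split; auto. intros u' Xu'.
        destruct (le_gt_dec (f u k) (f u' k)); auto.
        exfalso. apply H. exists u'. split; auto. lia. }
    destruct (Hmin (f w0 k) (ex_intro _ w0 (conj Hw0 (le_n _)))) as [v [Xv Hv]].
    destruct (IH (fun u => X u /\ f u k = f v k)) as [w [[Xw Ew] Hw]].
    { exists v; auto. }
    exists w. split; auto. intros u Xu. simpl.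
    specialize (Hv u Xu).
    destruct (Nat.eq_dec (f u k) (f v k)) as [E|E].
    + right. split; [lia|]. apply Hw. auto.
    + left. lia.
Qed.

Lemma least_exists (P : nat -> Prop) : forall n,
  (exists k, k <= n /\ P k) -> exists m, P m /\ forall k, k < m -> ~ P k.
Proof.
  induction n as [|n IH]; intros [k [Hk Pk]].
  - exists k. split; auto. intros; lia.
  - destruct (classic (exists k, k <= n /\ P k)) as [H|H]; auto.
    exists k. split; auto. intros k' Hk' Pk'. apply H. exists k'. split; auto.
    destruct (Nat.eq_dec k (S n)); [lia|]. exfalso; apply H; exists k; split; auto; lia.
Qed.

Lemma Epart_mono Rn : forall k r, Epart Rn (S k) r -> Epart Rn k r.
Proof.
  induction k as [|k IH]; intros r H.
  - simpl in *. tauto.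
  - destruct H as [Hin Hent]. split; auto.
    intros v Hv. apply Hent. intros f [r' [Hr' ->]]. apply Hv. exists r'. split; auto.
Qed.

Lemma filter_le {T} (p q : T -> bool) (l : list T) :
  (forall x, In x l -> q x = true -> p x = true) ->
  length (filter q l) <= length (filter p l).
Proof.
  induction l as [|a l IH]; intros H; simpl; auto.
  assert (IH' := IH (fun x Hx => H x (or_intror Hx))).
  destruct (q a) eqn:Eq.
  - rewrite (H a (or_introl eq_refl) Eq). simpl. lia.
  - destruct (p a); simpl; lia.
Qed.

Lemma filter_lt {T} (p q : T -> bool) (l : list T) :
  (forall x, In x l -> q x = true -> p x = true) ->
  (exists x, In x l /\ p x = true /\ q x = false) ->
  length (filter q l) < length (filter p l).
Proof.
  induction l as [|a l IH]; intros H [x [Hx [Px Qx]]]; simpl.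
  - destruct Hx.
  - assert (H' : forall x, In x l -> q x = true -> p x = true) by (intros; apply H; simpl; auto).
    destruct Hx as [<-|Hx].
    + rewrite Px, Qx. simpl. assert (Hle := filter_le p q l H'). lia.
    + assert (IH' := IH H' (ex_intro _ x (conj Hx (conj Px Qx)))).
      destruct (q a) eqn:Eq.
      * rewrite (H a (or_introl eq_refl) Eq). simpl. lia.
      * destruct (p a); simpl; lia.
Qed.

Lemma pdec_true (P : Prop) : P -> pdec P = true.
Proof. intros. unfold pdec. destruct (excluded_middle_informative P); tauto. Qed.
Lemma pdec_false (P : Prop) : ~ P -> pdec P = false.
Proof. intros. unfold pdec. destruct (excluded_middle_informative P); tauto. Qed.
Lemma pdec_elim (P : Prop) : pdec P = true -> P.
Proof. unfold pdec. destruct (excluded_middle_informative P); congruence. Qed.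

Lemma stab_exists Rn : exists m, stab_index Rn m.
Proof.
  set (c := fun k => length (filter (fun r => pdec (Epart Rn k r)) Rn)).
  set (St := fun k => forall r, Epart Rn (S k) r <-> Epart Rn k r).
  assert (Hdec : forall k, ~ St k -> c (S k) < c k).
  { intros k Hk. unfold c. apply filter_lt.
    - intros x _ Hx. apply pdec_true. apply Epart_mono. apply pdec_elim; auto.
    - destruct (classic (exists r, Epart Rn k r /\ ~ Epart Rn (S k) r)) as [[r [H1 H2]]|H].
      + exists r. repeat split.
        * clear -H1. induction k; simpl in *; tauto.
        * apply pdec_true; auto.
        * apply pdec_false; auto.
      + exfalso. apply Hk. intro r. split; [apply Epart_mono|].
        intro H1. apply NNPP. intro H2. apply H. exists r. auto. }
  assert (Hex : exists k, St k).
  { apply NNPP. intro H.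
    assert (forall k, c k + k <= c 0).
    { induction k; [lia|]. assert (c (S k) < c k) by (apply Hdec; intro; apply H; eauto). lia. }
    specialize (H0 (S (c 0))). lia. }
  destruct Hex as [k Hk].
  destruct (least_exists St k (ex_intro _ k (conj (le_n _) Hk))) as [m [Hm Hl]].
  exists m. split; auto.
Qed.

Theorem proposition7 (Gamma : list form) (Rn : list cond) (Ro : list obl)
    (A B : form) :
  theory_wf Gamma Rn Ro ->
  boolean A -> boolean B ->
  In (OB B A) Ro ->
  (forall r, In r Ro -> ~ overrides Gamma r (OB B A)) ->
  In (Dia (And A B)) Gamma ->
  nm_entails_obl Gamma Rn Ro (OB B A).
Proof.
  intros Hwf HA HB Hin Hnov Hdia M [Hinh [HN HI]] w HG.
  unfold sat_obl. intro Hlift.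
  assert (Hd := HG _ Hdia).
  assert (Hne : exists u, holds M u (And (obody (OB B A)) (ohead (OB B A)))).
  { apply NNPP. intro H. apply Hd. intros u Hu. apply H. exists u. exact Hu. }
  destruct (stab_exists Rn) as [m Hm].
  destruct (lexmin m (fcount Rn M) _ Hne) as [ws [Xw Hmin]].
  assert (Hmax : maxset (geN M) (fun u => holds M u (And (obody (OB B A)) (ohead (OB B A)))) ws).
  { split; auto. intros u Xu _. apply (HN m Hm). apply Hmin. auto. }
  destruct (Hlift ws Hmax) as [u [[Xu _] Hge]].
  pose proof (proj1 (HI u ws) Hge) as Hge2.
  assert (V : Viol Gamma Ro M u (OB B A)).
  { split; auto. destruct Xu as [X1 X2]. split; auto. split; auto.
    intros rj Hrj Hov. exfalso. exact (Hnov rj Hrj Hov). }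
  apply Hge2 in V. destruct V as [_ [_ [Hnh _]]]. apply Hnh. exact (proj2 Xw).
Qed.
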